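(* Let $a:[0,\infty)\to\mathbb{R}$ satisfy $c_1\le a(r)\le c_2$ for all $r\ge0$ (constants $0<c_1\le c_2$) and $|a(r_1)-a(r_2)|\le L_a|r_1-r_2|$ for all $r_1,r_2\ge0$ (constant $L_a>0$). For $x_1,\dots,x_N\in\mathbb{R}^d$ set $\phi_{ij}=\frac{a(\|x_i-x_j\|)}{\sum_{k=1}^Na(\|x_i-x_k\|)}$. Then \[ |\phi_{il}-\phi_{jl}|\le\|\phi\|_{\mathrm{Lip}}\|x_i-x_j\|\qquad\text{for all } i,j,l\in\{1,\dots,N\}, \] where $\|\phi\|_{\mathrm{Lip}}:=\frac{L_a}{Nc_1}\left(1+\frac{c_2}{c_1}\right)$.
   Context: $\|\cdot\|$ denotes the Euclidean norm on $\mathbb{R}^d$. *)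

(* Defs.v *)
From HB Require Import structures.
From mathcomp Require Import all_boot all_order all_algebra.
Set Implicit Arguments. Unset Strict Implicit. Unset Printing Implicit Defensive.
Import Order.TTheory GRing.Theory Num.Theory.
Local Open Scope ring_scope.

Definition enorm (R : rcfType) (d : nat) (v : 'rV[R]_d) : R :=
  Num.sqrt (\sum_(k < d) (v ord0 k) ^+ 2).

Definition phi (R : rcfType) (d N : nat) (a : R -> R) (x : 'I_N -> 'rV[R]_d)
  (i j : 'I_N) : R :=
  a (enorm (x i - x j)) / \sum_(k < N) a (enorm (x i - x k)).

Definition phi_Lip (R : rcfType) (N : nat) (c1 c2 La : R) : R :=
  La / (N%:R * c1) * (1 + c2 / c1).

(* Main.v *)
Require Import Defs.
From HB Require Import structures.
From mathcomp Require Import all_boot all_order all_algebra.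
From mathcomp Require Import ring lra.
Import Order.TTheory GRing.Theory Num.Theory.
Local Open Scope ring_scope.

Section E.
Variables (R : rcfType) (d : nat).

Lemma enorm_ge0 (u : 'rV[R]_d) : 0 <= enorm u.
Proof. exact: sqrtr_ge0. Qed.

Lemma enorm_sq (u : 'rV[R]_d) : enorm u ^+ 2 = \sum_(k < d) (u ord0 k) ^+ 2.
Proof. rewrite /enorm sqr_sqrtr //; apply: sumr_ge0 => k _; exact: sqr_ge0. Qed.

Lemma enorm0_coord (u : 'rV[R]_d) : enorm u = 0 -> forall k, u ord0 k = 0.
Proof.
move=> h k; have h2 : \sum_(k < d) (u ord0 k) ^+ 2 = 0 by rewrite -enorm_sq h expr0n.
have := psumr_eq0P (fun i _ => sqr_ge0 (u ord0 i)) h2 (i:=k) isT.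
by move/eqP; rewrite sqrf_eq0 => /eqP.
Qed.

Lemma cs (u v : 'rV[R]_d) :
  \sum_(k < d) u ord0 k * v ord0 k <= enorm u * enorm v.
Proof.
set A := enorm u; set B := enorm v.
have [A0|Apos] := eqVneq A 0.
  rewrite A0 mul0r big1 // => k _; by rewrite (@enorm0_coord u A0) mul0r.
have [B0|Bpos] := eqVneq B 0.
  rewrite B0 mulr0 big1 // => k _; by rewrite (@enorm0_coord v B0) mulr0.
have Ap : 0 < A by rewrite lt_def Apos enorm_ge0.
have Bp : 0 < B by rewrite lt_def Bpos enorm_ge0.
have key : (A * B *+ 2) * \sum_(k < d) u ord0 k * v ord0 k <=
           (A * B *+ 2) * (A * B).
  rewrite mulr_sumr.
  have -> : (A * B *+ 2) * (A * B) =
     \sum_(k < d) ((u ord0 k) ^+ 2 * B ^+ 2 + (v ord0 k) ^+ 2 * A ^+ 2).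
    rewrite big_split /= -!mulr_suml -!enorm_sq -/A -/B; ring.
  apply: ler_sum => k _.
  have := sqr_ge0 (u ord0 k * B - v ord0 k * A); nra.
by rewrite ler_pM2l // in key; rewrite mulrn_wgt0 // mulr_gt0.
Qed.

Lemma enorm_triangle (u v : 'rV[R]_d) : enorm (u + v) <= enorm u + enorm v.
Proof.
rewrite -(ler_pXn2r (n:=2)) //; last by rewrite nnegrE addr_ge0 // enorm_ge0.
  2: by rewrite nnegrE enorm_ge0.
rewrite enorm_sq.
have -> : \sum_(k < d) (u + v) ord0 k ^+ 2 =
   \sum_(k < d) (u ord0 k) ^+ 2 + \sum_(k < d) (v ord0 k) ^+ 2
   + (\sum_(k < d) u ord0 k * v ord0 k) *+ 2.
  rewrite -sumrMnl -!big_split /=; apply: eq_bigr => k _; rewrite mxE; ring.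
rewrite -!enorm_sq; have := cs u v; lra.
Qed.

Lemma enorm_rev (u v : 'rV[R]_d) : `|enorm u - enorm v| <= enorm (u - v).
Proof.
have h1 := enorm_triangle (u - v) v; rewrite subrK in h1.
have h2 := enorm_triangle (v - u) u; rewrite subrK in h2.
have e : enorm (v - u) = enorm (u - v).
  rewrite /enorm; congr Num.sqrt; apply: eq_bigr => k _; rewrite !mxE; ring.
rewrite e in h2.
by rewrite ler_norml; apply/andP; split; lra.
Qed.
End E.
Arguments enorm_ge0 {R d} u.
Arguments enorm_rev {R d} u v.
Arguments enorm_triangle {R d} u v.
Theorem lemma3p1 (R : rcfType) (d N : nat) (a : R -> R) (c1 c2 La : R)
  (hc1 : 0 < c1) (hc12 : c1 <= c2) (hLa : 0 < La)
  (ha_bd : forall r : R, 0 <= r -> c1 <= a r <= c2)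
  (ha_lip : forall r1 r2 : R, 0 <= r1 -> 0 <= r2 ->
     `|a r1 - a r2| <= La * `|r1 - r2|)
  (x : 'I_N -> 'rV[R]_d) :
  forall i j l : 'I_N,
    `|phi a x i l - phi a x j l| <= phi_Lip N c1 c2 La * enorm (x i - x j).
Proof.
move=> i j l.
set D := enorm (x i - x j).
have D0 : 0 <= D by apply: enorm_ge0.
have lipk : forall k, `|a (enorm (x i - x k)) - a (enorm (x j - x k))| <= La * D.
  move=> k; apply: le_trans (ha_lip _ _ (enorm_ge0 _) (enorm_ge0 _)) _.
  rewrite ler_pM2l //; apply: le_trans (enorm_rev _ _) _.
  by rewrite /D; have -> : x i - x k - (x j - x k) = x i - x j by rewrite opprB addrA subrK.
set Si := \sum_(k < N) a (enorm (x i - x k)).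
set Sj := \sum_(k < N) a (enorm (x j - x k)).
have Npos : (0 < N)%N by exact: (leq_ltn_trans (leq0n i) (ltn_ord i)).
have NR : 0 < N%:R :> R by rewrite ltr0n.
have Sge : forall y : 'rV[R]_d, N%:R * c1 <= \sum_(k < N) a (enorm (y - x k)).
  move=> y; have -> : N%:R * c1 = \sum_(k < N) c1 by rewrite sumr_const card_ord mulr_natl.
  by apply: ler_sum => k _; case/andP: (ha_bd _ (enorm_ge0 (y - x k))).
have Sdiff : `|Si - Sj| <= N%:R * (La * D).
  rewrite /Si /Sj -sumrB; apply: le_trans (ler_norm_sum _ _ _) _.
  have -> : N%:R * (La * D) = \sum_(k < N) (La * D) by rewrite sumr_const card_ord mulr_natl.
  by apply: ler_sum => k _; apply: lipk.
have Sip := Sge (x i); have Sjp := Sge (x j).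
rewrite -/Si in Sip; rewrite -/Sj in Sjp.
set P := N%:R * c1.
have Pp : 0 < P by rewrite mulr_gt0.
have Sip' : 0 < Si by apply: lt_le_trans Sip.
have Sjp' : 0 < Sj by apply: lt_le_trans Sjp.
set ail := a (enorm (x i - x l)); set ajl := a (enorm (x j - x l)).
have hl := lipk l; rewrite -/ail -/ajl in hl.
have /andP [hj1 hj2] := ha_bd _ (enorm_ge0 (x j - x l)); rewrite -/ajl in hj1 hj2.
rewrite /phi -/Si -/Sj -/ail -/ajl.
have -> : ail / Si - ajl / Sj = (ail - ajl) / Si + ajl * (Sj - Si) / (Si * Sj).
  by field; apply/andP; split; rewrite gt_eqF.
apply: le_trans (ler_normD _ _) _.
rewrite !normrM !normfV (gtr0_norm Sip') (gtr0_norm (mulr_gt0 Sip' Sjp')).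
rewrite (gtr0_norm (lt_le_trans hc1 hj1)) (distrC Sj).
have t1 : `|ail - ajl| / Si <= La * D / P.
  apply: ler_pM => //; first by rewrite invr_ge0 ltW.
  by rewrite lef_pV2 // posrE.
have t2 : ajl * `|Si - Sj| / (Si * Sj) <= c2 * (N%:R * (La * D)) / (P * P).
  apply: ler_pM => //; first by rewrite mulr_ge0 // ltW // (lt_le_trans hc1 hj1).
  - by rewrite invr_ge0 ltW // mulr_gt0.
  - by apply: ler_pM => //; apply: ltW; apply: lt_le_trans hj1.
  rewrite lef_pV2 ?posrE ?mulr_gt0 //.
  by apply: ler_pM => //; apply: ltW.
apply: le_trans (lerD t1 t2) _.
rewrite /phi_Lip -/P le_eqVlt; apply/orP; left; apply/eqP.
rewrite /P; field; apply/andP; split; rewrite gt_eqF //.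
Qed.
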